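(* Fix $t\in[0,1/2]$. Let $A,B,S,T\subset[n]$ be pairwise disjoint and let $F,G:\{0,1\}^n\times\{0,1\}^n\to\mathbb R$ be such that $F(\omega,\omega_t)$ is measurable with respect to $\{(\omega(x),\omega_t(x)):x\in A\cup S\cup T\}$, $G(\omega,\omega_t)$ is measurable with respect to $\{(\omega(x),\omega_t(x)):x\in B\cup S\cup T\}$, and $F,G$ are both $S$-increasing and $T$-decreasing. Then $$\mathbb E[F(\omega,\omega_t)G(\omega,\omega_t)]\ge\mathbb E[F(\omega,\omega_t)]\,\mathbb E[G(\omega,\omega_t)].$$
   Context: $\omega$ is uniform on $\{0,1\}^n$ and $\omega_t$ is obtained from $\omega$ by flipping each coordinate independently with probability $t$. $x^i$ (resp. $x_i$) is $x$ with $i$-th coordinate set to $1$ (resp. $0$). For $S\subset[n]$, $F$ is $S$-increasing if for all $x,y\in\{0,1\}^n$ and all $i\in S$: $F(x^i,y)\ge F(x_i,y)$ and $F(x,y^i)\ge F(x,y_i)$; $F$ is $T$-decreasing if for all $x,y$ and $i\in T$: $F(x^i,y)\le F(x_i,y)$ and $F(x,y^i)\le F(x,y_i)$. *)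

(* Defs.v *)
From mathcomp Require Import all_boot all_order all_algebra.
Set Implicit Arguments. Unset Strict Implicit. Unset Printing Implicit Defensive.
Import Order.TTheory GRing.Theory Num.Theory.
Local Open Scope ring_scope.

Notation config n := {ffun 'I_n -> bool}.

(* setc x i b : x with i-th coordinate set to b  (x^i = setc x i true,
   x_i = setc x i false). *)
Definition setc (n : nat) (x : config n) (i : 'I_n) (b : bool) : config n :=
  [ffun j => if j == i then b else x j].

(* Joint law of (omega, omega_t): omega uniform, each coordinate flipped
   independently with probability t. *)
Definition pjoint (R : realFieldType) (n : nat) (t : R) (x y : config n) : R :=
  (2%:R ^- n) * \prod_(i < n) (if x i == y i then 1 - t else t).

Definition Ejoint (R : realFieldType) (n : nat) (t : R)
  (H : config n -> config n -> R) : R :=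
  \sum_(x : config n) \sum_(y : config n) pjoint t x y * H x y.

(* H(omega, omega_t) is measurable w.r.t. {(omega(x), omega_t(x)) : x in D}:
   H depends only on the coordinates in D of both arguments. *)
Definition depends_only (R : Type) (n : nat) (D : {set 'I_n})
  (H : config n -> config n -> R) : Prop :=
  forall x y x' y' : config n,
    (forall i, i \in D -> x i = x' i /\ y i = y' i) -> H x y = H x' y'.

Definition S_increasing (R : realFieldType) (n : nat) (S : {set 'I_n})
  (H : config n -> config n -> R) : Prop :=
  forall (x y : config n) (i : 'I_n), i \in S ->
    H (setc x i true) y >= H (setc x i false) y /\
    H x (setc y i true) >= H x (setc y i false).

Definition T_decreasing (R : realFieldType) (n : nat) (T : {set 'I_n})
  (H : config n -> config n -> R) : Prop :=
  forall (x y : config n) (i : 'I_n), i \in T ->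
    H (setc x i true) y <= H (setc x i false) y /\
    H x (setc y i true) <= H x (setc y i false).

(* Main.v *)
Require Import Defs.
From mathcomp Require Import all_boot all_order all_algebra.
From mathcomp Require Import ring lra.
From Stdlib Require Import FunctionalExtensionality.
Import Order.TTheory GRing.Theory Num.Theory.
Set Implicit Arguments. Unset Strict Implicit. Unset Printing Implicit Defensive.
Local Open Scope ring_scope.

Lemma four (R : realFieldType) (p q a b c d a' b' c' d' : R) :
  0 <= q -> q <= p -> p + p + q + q = 1 ->
  a <= b -> b <= d -> a <= c -> c <= d ->
  a' <= b' -> b' <= d' -> a' <= c' -> c' <= d' ->
  (p * a + q * b + q * c + p * d) * (p * a' + q * b' + q * c' + p * d') <=
  p * (a * a') + q * (b * b') + q * (c * c') + p * (d * d').
Proof.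
move=> q0 qp s ab bd ac cd ab' bd' ac' cd'.
have key : 0 <= (d-a) * (d'-a') + (b-c) * (b'-c') by nra.
have E : p * (a * a') + q * (b * b') + q * (c * c') + p * (d * d') - 
  (p * a + q * b + q * c + p * d) * (p * a' + q * b' + q * c' + p * d') =
  p * p * ((d-a) * (d'-a')) + p * q * ((b-a) * (b'-a')) + p * q * ((c-a) * (c'-a'))
  + p * q * ((d-b) * (d'-b')) + p * q * ((d-c) * (d'-c')) + q * q * ((b-c) * (b'-c')).
  have -> : p * (a * a') + q * (b * b') + q * (c * c') + p * (d * d') = (p * (a * a') + q * (b * b') + q * (c * c') + p * (d * d')) * (p + p + q + q) by rewrite s mulr1.
  ring.
rewrite -subr_ge0 E.
have h1 : 0 <= (d-a) * (d'-a') by apply: mulr_ge0; lra.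
have h2 : 0 <= (b-a) * (b'-a') by apply: mulr_ge0; lra.
have h3 : 0 <= (c-a) * (c'-a') by apply: mulr_ge0; lra.
have h4 : 0 <= (d-b) * (d'-b') by apply: mulr_ge0; lra.
have h5 : 0 <= (d-c) * (d'-c') by apply: mulr_ge0; lra.
have pq : 0 <= p * q by nra.
have qq : q * q <= p * p by nra.
nra.
Qed.

Lemma four_dec (R : realFieldType) (p q a b c d a' b' c' d' : R) :
  0 <= q -> q <= p -> p + p + q + q = 1 ->
  b <= a -> d <= b -> c <= a -> d <= c ->
  b' <= a' -> d' <= b' -> c' <= a' -> d' <= c' ->
  (p * a + q * b + q * c + p * d) * (p * a' + q * b' + q * c' + p * d') <=
  p * (a * a') + q * (b * b') + q * (c * c') + p * (d * d').
Proof.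
move=> q0 qp s ab bd ac cd ab' bd' ac' cd'.
have := @four R p q (-a) (-b) (-c) (-d) (-a') (-b') (-c') (-d') q0 qp s.
rewrite !lerN2 => /(_ ab bd ac cd ab' bd' ac' cd').
rewrite !mulrNN.
have -> : (p * - a + q * - b + q * - c + p * - d) * (p * - a' + q * - b' + q * - c' + p * - d')
  = (p * a + q * b + q * c + p * d) * (p * a' + q * b' + q * c' + p * d') by ring.
by [].
Qed.

Notation K := (bool * bool)%type.

Definition nu (R : realFieldType) (t : R) (k : K) : R :=
  2%:R^-1 * (if k.1 == k.2 then 1 - t else t).

Lemma sumK (R : realFieldType) (f : K -> R) :
  \sum_(k : K) f k = f (true,true) + f (true,false) + f (false,true) + f (false,false).
Proof.
transitivity (\sum_(a : bool) \sum_(b : bool) f (a,b)).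
  by rewrite pair_bigA; apply: eq_bigr => -[a b].
rewrite !big_bool /=. by rewrite !addrA.
Qed.

Lemma nu_sum (R : realFieldType) (t : R) : \sum_k nu t k = 1.
Proof. rewrite sumK /nu /=. by field. Qed.

Lemma nu_ge0 (R : realFieldType) (t : R) k : 0 <= t -> t <= 1 -> 0 <= nu t k.
Proof.
move=> ? ?; rewrite /nu; apply: mulr_ge0; first by rewrite invr_ge0 ler0n.
by case: ifP => _; lra.
Qed.

Definition incK (R : realFieldType) (f : K -> R) :=
  (forall b, f (false,b) <= f (true,b)) /\ (forall a, f (a,false) <= f (a,true)).
Definition decK (R : realFieldType) (f : K -> R) :=
  (forall b, f (true,b) <= f (false,b)) /\ (forall a, f (a,true) <= f (a,false)).
Definition cstK (R : realFieldType) (f : K -> R) := forall k, f k = f (false,false).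

Definition Ok (R : realFieldType) n (A B S T : {set 'I_n}) (i : 'I_n) (f g : K -> R) :=
  [/\ i \in S -> incK f /\ incK g, i \in T -> decK f /\ decK g,
      i \notin A :|: S :|: T -> cstK f & i \notin B :|: S :|: T -> cstK g].

Lemma cst_corr (R : realFieldType) (t : R) (f g : K -> R) :
  (cstK f \/ cstK g) ->
  (\sum_k nu t k * f k) * (\sum_k nu t k * g k) <= \sum_k nu t k * (f k * g k).
Proof.
case=> H.
  have -> : \sum_k nu t k * (f k * g k) = f (false,false) * \sum_k nu t k * g k.
    rewrite big_distrr; apply: eq_bigr => k _; by rewrite H mulrCA.
  have -> : \sum_k nu t k * f k = f (false,false).
    rewrite (eq_bigr (fun k => nu t k * f (false,false))) => [|k _]; last by rewrite H.
    by rewrite -big_distrl /= nu_sum mul1r.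
  by [].
have -> : \sum_k nu t k * (f k * g k) = g (false,false) * \sum_k nu t k * f k.
  rewrite big_distrr; apply: eq_bigr => k _; by rewrite H [f k * _]mulrC mulrCA.
have -> : \sum_k nu t k * g k = g (false,false).
  rewrite (eq_bigr (fun k => nu t k * g (false,false))) => [|k _]; last by rewrite H.
  by rewrite -big_distrl /= nu_sum mul1r.
by rewrite mulrC.
Qed.

Lemma corr (R : realFieldType) n (A B S T : {set 'I_n}) (t : R) i (f g : K -> R) :
  0 <= t -> t <= 2%:R^-1 ->
  [disjoint A & B] -> [disjoint A & S] -> [disjoint A & T] ->
  [disjoint B & S] -> [disjoint B & T] -> [disjoint S & T] ->
  Ok A B S T i f g ->
  (\sum_k nu t k * f k) * (\sum_k nu t k * g k) <= \sum_k nu t k * (f k * g k).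
Proof.
move=> t0 t2 dAB dAS dAT dBS dBT dST [HS HT HA HB].
have q0 : 0 <= 2%:R^-1 * t :> R by apply: mulr_ge0 => //; rewrite invr_ge0 ler0n.
have qp : 2%:R^-1 * t <= 2%:R^-1 * (1 - t) :> R.
  by apply: ler_wpM2l; [rewrite invr_ge0 ler0n | lra].
have s : 2%:R^-1 * (1 - t) + 2%:R^-1 * (1 - t) + 2%:R^-1 * t + 2%:R^-1 * t = 1 :> R by field.
case: (boolP (i \in S)) => iS.
  have [[f1 f2] [g1 g2]] := HS iS.
  rewrite !sumK /nu /=.
  have := four q0 qp s (f2 false) (f1 true) (f1 false) (f2 true)
                       (g2 false) (g1 true) (g1 false) (g2 true).
  move=> H; lra.
case: (boolP (i \in T)) => iT.
  have [[f1 f2] [g1 g2]] := HT iT.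
  rewrite !sumK /nu /=.
  have := four_dec q0 qp s (f2 false) (f1 true) (f1 false) (f2 true)
                       (g2 false) (g1 true) (g1 false) (g2 true).
  move=> H; lra.
apply: cst_corr.
case: (boolP (i \in A)) => iA.
  right; apply: HB; rewrite !inE (disjointFr dAB iA) (negbTE iS) (negbTE iT) //.
left; apply: HA; rewrite !inE (negbTE iA) (negbTE iS) (negbTE iT) //.
Qed.

Notation Z n := {ffun 'I_n -> K}.

Definition upd n (z : Z n) (i : 'I_n) (k : K) : Z n :=
  [ffun j => if j == i then k else z j].
Definition mrg n (U : {set 'I_n}) (w z : Z n) : Z n :=
  [ffun j => if j \in U then w j else z j].
Definition cw (R : realFieldType) (t : R) n (w : Z n) : R := \prod_j nu t (w j).
Definition ci (R : realFieldType) (t : R) n (i : 'I_n) (w : Z n) : R :=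
  \prod_(j | j != i) nu t (w j).
Definition EU (R : realFieldType) (t : R) n (U : {set 'I_n}) (H : Z n -> R) (z : Z n) : R :=
  \sum_w cw t w * H (mrg U w z).

Lemma cw_split (R : realFieldType) (t : R) n (i : 'I_n) (w : Z n) :
  cw t w = nu t (w i) * ci t i w.
Proof. by rewrite /cw (bigD1 i). Qed.

Lemma ci_upd (R : realFieldType) (t : R) n (i : 'I_n) (w : Z n) k :
  ci t i (upd w i k) = ci t i w.
Proof. by apply: eq_bigr => j /negbTE ji; rewrite ffunE ji. Qed.

Lemma upd_id n (w : Z n) i k : w i = k -> upd w i k = w.
Proof. by move=> wi; apply/ffunP => j; rewrite ffunE; case: eqP => // ->. Qed.

Lemma upd_upd n (w : Z n) i a b : upd (upd w i a) i b = upd w i b.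
Proof. by apply/ffunP => j; rewrite !ffunE; case: eqP. Qed.

Definition swapk (k k' x : K) := if x == k then k' else if x == k' then k else x.

Lemma swapkK k k' x : swapk k k' (swapk k k' x) = x.
Proof. by case: x k k' => [[] []] [[] []] [[] []]. Qed.

Lemma swapk_eq k k' x : (swapk k k' x == k') = (x == k).
Proof. by case: x k k' => [[] []] [[] []] [[] []]. Qed.

Lemma Qlem (R : realFieldType) (t : R) n (i : 'I_n) k (Y : Z n -> R) :
  \sum_w cw t w * Y (upd w i k) = \sum_(w : Z n | w i == k) ci t i w * Y w.
Proof.
rewrite (partition_big (fun w : Z n => w i) xpredT) //=.
transitivity (\sum_(k' : K) nu t k' * \sum_(w : Z n | w i == k) ci t i w * Y w); last first.
  by rewrite -big_distrl /= nu_sum mul1r.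
apply: eq_bigr => k' _; rewrite big_distrr /=.
pose sw (w : Z n) := upd w i (swapk k k' (w i)).
have swK : involutive sw.
  move=> w; rewrite /sw upd_upd ffunE eqxx swapkK; exact: upd_id.
have E : forall w, (sw w i == k') = (w i == k).
  by move=> w; rewrite /sw ffunE eqxx swapk_eq.
rewrite (reindex_inj (inv_inj swK)).
apply: eq_big => w; first by rewrite /= E.
rewrite /= E.
move=> /eqP wik.
have -> : sw w = upd w i k' by rewrite /sw wik /swapk eqxx.
rewrite upd_upd (upd_id wik) (cw_split _ i) ci_upd ffunE eqxx.
by rewrite mulrA.
Qed.

Lemma resample (R : realFieldType) (t : R) n (i : 'I_n) (Y : Z n -> R) :
  \sum_w cw t w * Y w = \sum_k nu t k * \sum_w cw t w * Y (upd w i k).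
Proof.
rewrite (partition_big (fun w : Z n => w i) xpredT) //=.
apply: eq_bigr => k _; rewrite Qlem big_distrr /=.
apply: eq_big => // w /eqP wik.
by rewrite (cw_split _ i) wik mulrA.
Qed.

Lemma merge_upd n (U : {set 'I_n}) i (w z : Z n) k : i \notin U ->
  mrg (i |: U) (upd w i k) z = mrg U w (upd z i k).
Proof.
move=> iU; apply/ffunP => j; rewrite !ffunE in_setU1.
case: (eqVneq j i) => [->|ji] /=; first by rewrite (negbTE iU).
by [].
Qed.

Lemma merge_upd2 n (U : {set 'I_n}) i (w z : Z n) k : i \notin U ->
  mrg U w (upd z i k) = upd (mrg U w z) i k.
Proof.
move=> iU; apply/ffunP => j; rewrite !ffunE.
case: (eqVneq j i) => [->|ji] /=; first by rewrite (negbTE iU).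
by [].
Qed.

Lemma EU_step (R : realFieldType) (t : R) n (U : {set 'I_n}) i H z : i \notin U ->
  EU t (i |: U) H z = \sum_k nu t k * EU t U H (upd z i k).
Proof.
move=> iU; rewrite /EU (resample _ i); apply: eq_bigr => k _; congr (_ * _).
by apply: eq_bigr => w _; rewrite merge_upd.
Qed.

Lemma cw_sum (R : realFieldType) (t : R) n : \sum_(w : Z n) cw t w = 1.
Proof.
rewrite /cw -(bigA_distr_bigA (fun (_ : 'I_n) (k : K) => nu t k)) /=.
by rewrite big1 // => j _; rewrite nu_sum.
Qed.

Lemma cw_ge0 (R : realFieldType) (t : R) n (w : Z n) : 0 <= t -> t <= 1 -> 0 <= cw t w.
Proof. by move=> ? ?; apply: prodr_ge0 => j _; exact: nu_ge0. Qed.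

Lemma EU0 (R : realFieldType) (t : R) n H (z : Z n) : EU t set0 H z = H z.
Proof.
rewrite /EU (eq_bigr (fun w => cw t w * H z)) => [|w _]; last first.
  by congr (_ * H _); apply/ffunP => j; rewrite !ffunE inE.
by rewrite -big_distrl /= cw_sum mul1r.
Qed.

Lemma EUT (R : realFieldType) (t : R) n H (z : Z n) :
  EU t setT H z = \sum_w cw t w * H w.
Proof.
by apply: eq_bigr => w _; congr (_ * H _); apply/ffunP => j; rewrite !ffunE inE.
Qed.

Lemma sum_le_pt (R : realFieldType) (I : finType) (c : I -> R) (P : I -> K -> R) k1 k2 :
  (forall w, 0 <= c w) -> (forall w, P w k1 <= P w k2) ->
  \sum_w c w * P w k1 <= \sum_w c w * P w k2.
Proof. by move=> c0 H; apply: ler_sum => w _; apply: ler_wpM2l. Qed.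

Lemma inc_sum (R : realFieldType) (I : finType) (c : I -> R) (P : I -> K -> R) :
  (forall w, 0 <= c w) -> (forall w, incK (P w)) -> incK (fun k => \sum_w c w * P w k).
Proof.
move=> c0 H; split=> [b|a]; apply: sum_le_pt => // w; [exact: (H w).1 | exact: (H w).2].
Qed.

Lemma dec_sum (R : realFieldType) (I : finType) (c : I -> R) (P : I -> K -> R) :
  (forall w, 0 <= c w) -> (forall w, decK (P w)) -> decK (fun k => \sum_w c w * P w k).
Proof.
move=> c0 H; split=> [b|a]; apply: sum_le_pt => // w; [exact: (H w).1 | exact: (H w).2].
Qed.

Lemma cst_sum (R : realFieldType) (I : finType) (c : I -> R) (P : I -> K -> R) :
  (forall w, cstK (P w)) -> cstK (fun k => \sum_w c w * P w k).
Proof. by move=> H k; apply: eq_bigr => w _; rewrite H. Qed.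

Lemma Ok_sum (R : realFieldType) n (A B S T : {set 'I_n}) i (I : finType) (c : I -> R)
  (P Q : I -> K -> R) :
  (forall w, 0 <= c w) -> (forall w, Ok A B S T i (P w) (Q w)) ->
  Ok A B S T i (fun k => \sum_w c w * P w k) (fun k => \sum_w c w * Q w k).
Proof.
move=> c0 H; split.
- move=> iS; split; [apply: inc_sum => // w | apply: inc_sum => // w];
    by case: (H w) => /(_ iS) [].
- move=> iT; split; [apply: dec_sum => // w | apply: dec_sum => // w];
    by case: (H w) => _ /(_ iT) [].
- move=> iA; apply: cst_sum => w; by case: (H w) => _ _ /(_ iA).
- move=> iB; apply: cst_sum => w; by case: (H w) => _ _ _ /(_ iB).
Qed.

Definition good (R : realFieldType) n (A B S T : {set 'I_n}) (F G : Z n -> R) :=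
  forall i z, Ok A B S T i (fun k => F (upd z i k)) (fun k => G (upd z i k)).

Lemma harris (R : realFieldType) n (A B S T : {set 'I_n}) (t : R) (F G : Z n -> R) :
  0 <= t -> t <= 2%:R^-1 ->
  [disjoint A & B] -> [disjoint A & S] -> [disjoint A & T] ->
  [disjoint B & S] -> [disjoint B & T] -> [disjoint S & T] ->
  good A B S T F G ->
  forall U z, EU t U F z * EU t U G z <= EU t U (fun w => F w * G w) z.
Proof.
move=> t0 t2 dAB dAS dAT dBS dBT dST gd U.
have t1 : t <= 1.
  apply: (le_trans t2); rewrite invf_le1 ?ltr0n //. by rewrite ler1n.
rewrite -(set_enum U).
elim: (enum U) => [|i s IH] z.
  have -> : [set x in [::]] = set0 :> {set 'I_n} by apply/setP => x; rewrite !inE.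
  by rewrite !EU0.
case: (boolP (i \in s)) => his.
  have -> : [set x in i :: s] = [set x in s].
    by apply/setP => x; rewrite !inE; case: eqP => // ->.
  exact: IH.
have -> : [set x in i :: s] = i |: [set x in s] by apply/setP => x; rewrite !inE.
have iU : i \notin [set x in s] by rewrite inE.
set U' := [set x in s] in IH iU *.
rewrite !EU_step //.
apply: le_trans (_ : _ <= \sum_k nu t k * (EU t U' F (upd z i k) * EU t U' G (upd z i k))) _.
  apply: (@corr R n A B S T t i (fun k => EU t U' F (upd z i k)) (fun k => EU t U' G (upd z i k))) => //.
  have -> : (fun k => EU t U' F (upd z i k)) =
            (fun k => \sum_w cw t w * (fun w k => F (upd (mrg U' w z) i k)) w k).
    apply: functional_extensionality => k; apply: eq_bigr => w _; by rewrite merge_upd2.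
  have -> : (fun k => EU t U' G (upd z i k)) =
            (fun k => \sum_w cw t w * (fun w k => G (upd (mrg U' w z) i k)) w k).
    apply: functional_extensionality => k; apply: eq_bigr => w _; by rewrite merge_upd2.
  apply: Ok_sum => w; [exact: cw_ge0 | exact: gd].
apply: ler_sum => k _; apply: ler_wpM2l; [exact: nu_ge0 | exact: IH].
Qed.

Definition xof n (z : Z n) : config n := [ffun j => (z j).1].
Definition yof n (z : Z n) : config n := [ffun j => (z j).2].

Lemma Ejoint_conv (R : realFieldType) n (t : R) (H : config n -> config n -> R) :
  Ejoint t H = \sum_w cw t w * H (xof w) (yof w).
Proof.
rewrite /Ejoint pair_bigA /=.
rewrite (reindex (fun w : Z n => (xof w, yof w))) /=; last first.
  apply: onW_bij; exists (fun p : config n * config n => [ffun j => (p.1 j, p.2 j)]).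
    by move=> w; apply/ffunP => j; rewrite !ffunE -surjective_pairing.
  by move=> [x y] /=; congr pair; apply/ffunP => j; rewrite !ffunE.
apply: eq_bigr => w _; congr (_ * _).
rewrite /pjoint /cw /nu big_split /= prodr_const card_ord exprVn.
congr (_ * _); apply: eq_bigr => j _; by rewrite !ffunE.
Qed.

Lemma xof_upd n (z : Z n) i k : xof (upd z i k) = setc (xof z) i k.1.
Proof. by apply/ffunP => j; rewrite !ffunE; case: eqP. Qed.
Lemma yof_upd n (z : Z n) i k : yof (upd z i k) = setc (yof z) i k.2.
Proof. by apply/ffunP => j; rewrite !ffunE; case: eqP. Qed.

Lemma good_of (R : realFieldType) n (A B S T : {set 'I_n}) (F G : config n -> config n -> R) :
  [disjoint A & B] -> [disjoint A & S] -> [disjoint A & T] ->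
  [disjoint B & S] -> [disjoint B & T] -> [disjoint S & T] ->
  depends_only (A :|: S :|: T) F ->
  depends_only (B :|: S :|: T) G ->
  S_increasing S F -> T_decreasing T F ->
  S_increasing S G -> T_decreasing T G ->
  good A B S T (fun z => F (xof z) (yof z)) (fun z => G (xof z) (yof z)).
Proof.
move=> _ _ _ _ _ _ DF DG SF TF SG TG i z.
rewrite /Ok /incK /decK /cstK /=.
have cst : forall (D : {set 'I_n}) (H : config n -> config n -> R), depends_only D H ->
   i \notin D -> forall k, H (xof (upd z i k)) (yof (upd z i k)) =
                           H (xof (upd z i (false,false))) (yof (upd z i (false,false))).
  move=> D H DH iD k; apply: DH => j jD.
  have ji : j != i by apply: contraNneq iD => <-.
  by rewrite !xof_upd !yof_upd !ffunE (negbTE ji).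
split.
- move=> iS.
  by split; split => b; rewrite !xof_upd !yof_upd /=; [exact: (SF _ _ _ iS).1 | exact: (SF _ _ _ iS).2
                         | exact: (SG _ _ _ iS).1 | exact: (SG _ _ _ iS).2].
- move=> iT.
  by split; split => b; rewrite !xof_upd !yof_upd /=; [exact: (TF _ _ _ iT).1 | exact: (TF _ _ _ iT).2
                         | exact: (TG _ _ _ iT).1 | exact: (TG _ _ _ iT).2].
- by move=> iD k; apply: (cst _ F DF iD).
- by move=> iD k; apply: (cst _ G DG iD).
Qed.

Theorem proposition3 (R : realFieldType) (n : nat) (t : R)
  (A B S T : {set 'I_n}) (F G : config n -> config n -> R) :
  0 <= t -> t <= 2%:R^-1 ->
  [disjoint A & B] -> [disjoint A & S] -> [disjoint A & T] ->
  [disjoint B & S] -> [disjoint B & T] -> [disjoint S & T] ->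
  depends_only (A :|: S :|: T) F ->
  depends_only (B :|: S :|: T) G ->
  S_increasing S F -> T_decreasing T F ->
  S_increasing S G -> T_decreasing T G ->
  Ejoint t (fun x y => F x y * G x y) >= Ejoint t F * Ejoint t G.
Proof.
move=> t0 t2 dAB dAS dAT dBS dBT dST DF DG SF TF SG TG.
have gd := good_of dAB dAS dAT dBS dBT dST DF DG SF TF SG TG.
have := harris t0 t2 dAB dAS dAT dBS dBT dST gd setT [ffun _ => (false,false)].
by rewrite !EUT !Ejoint_conv.
Qed.
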